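(* Let $n\ge2$, $r\ge1$, let $V_1,\dots,V_r\in\mathrm{Mat}(n,\mathbb{C})$ satisfy $\operatorname{tr}(V_s^*V_m)=\delta_{sm}$, and define $$P_{\mathcal T}=\sum_{s=1}^r\sum_{a,b,c,d=1}^n (V_s)_{ab}(\bar V_s)_{cd}\,E^{(n)}_{ac}\otimes E^{(n)}_{bd},\qquad A_{\mathcal T}=\sum_{s,m=1}^r E^{(r)}_{sm}\otimes\Big(\sum_{i=1}^r V_i\bar V_sV_m^tV_i^*\Big).$$ For $P\in\mathrm{Mat}(n^2,\mathbb{C})$ and real $Q>0$ consider the system $$P^*=P,\quad P^2=P,\quad Q^2(P_1P_2P_1-P_2P_1P_2)=P_1-P_2,\qquad(\ast)$$ with $P_1=P\otimes I_n$, $P_2=I_n\otimes P$. (a) If $P_{\mathcal T}$ is a nontrivial solution of $(\ast)$ and $k=\tfrac12\operatorname{rank}\big((P_{\mathcal T})_1-(P_{\mathcal T})_2\big)$, then for all integers $m\ge1$, $\operatorname{tr}(A_{\mathcal T}^m)=rn+(Q^{-2m}-1)k$. (b) If there exist a real $Q>1$ and a positive integer $k$ such that $\operatorname{tr}(A_{\mathcal T}^m)=rn+(Q^{-2m}-1)k$ for $m=1,2,3$, then $P_{\mathcal T}$ is a nontrivial solution of $(\ast)$ for this $Q$.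
   Context: $E^{(p)}_{ab}\in\mathrm{Mat}(p,\mathbb{C})$ is the matrix unit with $(E^{(p)}_{ab})_{ij}=\delta_{ai}\delta_{bj}$; $\bar V$ is entrywise complex conjugate, $V^t$ transpose, $V^*$ conjugate transpose; $\otimes$ is the Kronecker product. A solution of $(\ast)$ is trivial if $P=0$ or $P=I_n\otimes I_n$, nontrivial otherwise. *)

(* Defs.v *)
From HB Require Import structures.
From mathcomp Require Import all_boot all_order all_algebra.
From mathcomp Require Import reals.
From mathcomp Require Import complex mxtens.
Set Implicit Arguments. Unset Strict Implicit. Unset Printing Implicit Defensive.
Import Order.TTheory GRing.Theory Num.Theory.
Local Open Scope ring_scope.
Local Open Scope complex_scope.

Section Defs.
Variable R : realType.
Local Notation C := R[i].

Definition mxconj {m p} (A : 'M[C]_(m, p)) : 'M[C]_(m, p) := map_mx (@conjc R) A.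
Definition adj {m p} (A : 'M[C]_(m, p)) : 'M[C]_(p, m) := (mxconj A)^T.

Definition E {p} (a b : 'I_p) : 'M[C]_p := delta_mx a b.

Definition P1 {n} (P : 'M[C]_(n * n)) : 'M[C]_(n * n * n) := P *t (1%:M : 'M[C]_n).
Definition P2 {n} (P : 'M[C]_(n * n)) : 'M[C]_(n * n * n) :=
  castmx (mulnA n n n, mulnA n n n) ((1%:M : 'M[C]_n) *t P).

Definition is_solution {n} (Q : R) (P : 'M[C]_(n * n)) : Prop :=
  [/\ adj P = P, P *m P = P &
      (Q%:C) ^+ 2 *: (P1 P *m P2 P *m P1 P - P2 P *m P1 P *m P2 P) = P1 P - P2 P].

Definition nontrivial_solution {n} (Q : R) (P : 'M[C]_(n * n)) : Prop :=
  [/\ is_solution Q P, P != 0 & P != 1%:M].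

Definition PT {n r} (V : 'I_r -> 'M[C]_n) : 'M[C]_(n * n) :=
  \sum_(s < r) \sum_(a < n) \sum_(b < n) \sum_(c < n) \sum_(d < n)
    (V s a b * (mxconj (V s)) c d) *: (E a c *t E b d).

Definition AT {n r} (V : 'I_r -> 'M[C]_n) : 'M[C]_(r * n) :=
  \sum_(s < r) \sum_(m < r)
    (E s m *t (\sum_(i < r) V i *m mxconj (V s) *m (V m)^T *m adj (V i))).

End Defs.

(* Main.v *)
Require Import Defs.
From HB Require Import structures.
From mathcomp Require Import all_boot all_order all_algebra.
From mathcomp Require Import reals.
From mathcomp Require Import complex mxtens.
From mathcomp Require Import ring lra.
Import Order.TTheory GRing.Theory Num.Theory.
Local Open Scope ring_scope.
Local Open Scope complex_scope.

Set Implicit Arguments. Unset Strict Implicit. Unset Printing Implicit Defensive.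

Section Gen.
Variable R : realType.
Local Notation C := R[i].

Lemma mulcJ_ge0' (x : C) : 0 <= x * x^*%C.
Proof. exact: mulcJ_ge0. Qed.

Lemma cadjE m p (A : 'M[C]_(m, p)) i j : adj A i j = (A j i)^*%C.
Proof. by rewrite /adj /mxconj !mxE. Qed.

Lemma cadjK m p (A : 'M[C]_(m, p)) : adj (adj A) = A.
Proof. by apply/matrixP => i j; rewrite !cadjE conjcK. Qed.

Lemma cadjM m p s (A : 'M[C]_(m, p)) (B : 'M[C]_(p, s)) : adj (A *m B) = adj B *m adj A.
Proof. by rewrite /adj /mxconj map_mxM trmx_mul. Qed.

Lemma cadjD m p (A B : 'M[C]_(m, p)) : adj (A + B) = adj A + adj B.
Proof. by rewrite /adj /mxconj map_mxD linearD. Qed.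

Lemma cadjN m p (A : 'M[C]_(m, p)) : adj (- A) = - adj A.
Proof. by rewrite /adj /mxconj map_mxN linearN. Qed.

Lemma cadjB m p (A B : 'M[C]_(m, p)) : adj (A - B) = adj A - adj B.
Proof. by rewrite cadjD cadjN. Qed.

Lemma cadjZ m p a (A : 'M[C]_(m, p)) : adj (a *: A) = a^*%C *: adj A.
Proof. by apply/matrixP => i j; rewrite !(cadjE, mxE) rmorphM. Qed.

Lemma cadj1 m : adj (1%:M : 'M[C]_m) = 1%:M.
Proof. by rewrite /adj /mxconj map_mx1 trmx1. Qed.

Lemma cadj0 m p : adj (0 : 'M[C]_(m, p)) = 0.
Proof. by apply/matrixP => i j; rewrite !(cadjE, mxE) conjc0. Qed.

Lemma cadj_tens m p s t (A : 'M[C]_(m, p)) (B : 'M[C]_(s, t)) :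
  adj (A *t B) = adj A *t adj B.
Proof. by rewrite /adj /mxconj map_mxT trmx_tens. Qed.

Lemma cadj_cast p p' (e : p = p') (A : 'M[C]_p) : adj (castmx (e, e) A) = castmx (e, e) (adj A).
Proof. by case: p' / e; rewrite !castmx_id. Qed.

Lemma castmxM p p' (e : p = p') (A B : 'M[C]_p) :
  castmx (e, e) (A *m B) = castmx (e, e) A *m castmx (e, e) B.
Proof. by case: p' / e; rewrite !castmx_id. Qed.

Lemma castmx_tr p p' (e : p = p') (A : 'M[C]_p) : \tr (castmx (e, e) A) = \tr A.
Proof. by case: p' / e; rewrite !castmx_id. Qed.

Lemma castmx1 p p' (e : p = p') : castmx (e, e) (1%:M : 'M[C]_p) = 1%:M.
Proof. by case: p' / e; rewrite !castmx_id. Qed.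

Lemma tr_adj0 m p (M : 'M[C]_(m, p)) : \tr (M *m adj M) = 0 -> M = 0.
Proof.
rewrite /mxtrace => H.
have Hge : forall i (j : 'I_p), 0 <= M i j * adj M j i.
  by move=> i j; rewrite cadjE; exact: mulcJ_ge0'.
have H1 : forall i : 'I_m, (M *m adj M) i i = 0.
  move=> i; apply: (psumr_eq0P _ H) => // j _.
  by rewrite mxE; apply: sumr_ge0 => k _.
apply/matrixP => i j; rewrite mxE.
have := H1 i; rewrite mxE => /psumr_eq0P H2.
have /eqP := H2 (fun k _ => Hge i k) j isT.
by rewrite cadjE mulf_eq0 conjc_eq0 orbb => /eqP.
Qed.

Lemma MM0 m p (M : 'M[C]_(m, p)) : M *m adj M = 0 -> M = 0.
Proof. by move=> H; apply: tr_adj0; rewrite H mxtrace0. Qed.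

Lemma herm_nil N (A : 'M[C]_N) : adj A = A -> A *m A = 0 -> A = 0.
Proof. by move=> h H; apply: MM0; rewrite h. Qed.

Lemma cadjMr N (A B : 'M[C]_N) : adj (A * B) = adj B * adj A.
Proof. exact: cadjM. Qed.

End Gen.

Section Core.
Variable R : realType.
Local Notation C := R[i].
Variables (N : nat) (p1 p2 : 'M[C]_N).
Hypotheses (h1 : adj p1 = p1) (h2 : adj p2 = p2) (i1 : p1 *m p1 = p1) (i2 : p2 *m p2 = p2).

Lemma i1' m (A : 'M[C]_(m,N)) : A *m p1 *m p1 = A *m p1. Proof. by rewrite -mulmxA i1. Qed.
Lemma i2' m (A : 'M[C]_(m,N)) : A *m p2 *m p2 = A *m p2. Proof. by rewrite -mulmxA i2. Qed.

Ltac norm := rewrite ?mulmxA; do ? rewrite ?i1 ?i2 ?i1' ?i2'.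

Lemma R1_of_eq (c : C) : c *: (p1 *m p2 *m p1 - p2 *m p1 *m p2) = p1 - p2 ->
  c *: (p1 *m p2 *m p1 - (p1 *m p2 *m p1) *m (p1 *m p2 *m p1)) = p1 - p1 *m p2 *m p1.
Proof.
move=> E; have := congr1 (fun M => p1 *m M *m p1) E => /=.
rewrite -scalemxAr -scalemxAl !(mulmxBr, mulmxBl); norm; done.
Qed.

Local Notation X := (p1 *m p2 *m p1).
Local Notation Y := (p2 *m p1 *m p2).
Ltac pg := match goal with |- ?g => idtac g end.

Lemma negE (V : lmodType C) (a : C) (x y u v : V) :
  a *: (y - x) - (v - u) = - (a *: (x - y) - (u - v)).
Proof. by rewrite [RHS]opprB !scalerBr !opprB addrC. Qed.
Lemma sum4 (V : zmodType) (a b c d : V) : (a - b) + (c - d) = (a - d) - (b - c).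
Proof. by rewrite opprB addrACA [RHS]addrACA [- d + - b]addrC. Qed.

Lemma swapad (V : zmodType) (a b c d : V) : (a - b) - (c - d) = (d - b) - (c - a).
Proof. by rewrite !opprB addrACA [RHS]addrACA [d + a]addrC. Qed.

Lemma swap4 (V : zmodType) (a b c d : V) : (a - b) - (c - d) = (a - c) - (b - d).
Proof. by rewrite !opprD !opprK addrACA [- b + d]addrC. Qed.

Lemma DDp1 : (p1 - p2) *m (p1 - p2) *m p1 = p1 - X.
Proof. by rewrite !(mulmxBr, mulmxBl); norm; rewrite opprB addrA subrK. Qed.
Lemma DDp2 : (p1 - p2) *m (p1 - p2) *m p2 = p2 - Y.
Proof. by rewrite !(mulmxBr, mulmxBl); norm; rewrite opprB addrC addrA subrK. Qed.

Lemma D3 (q : C) : X - Y = q *: (p1 - p2) ->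
  (p1 - p2) *m (p1 - p2) *m (p1 - p2) = (1 - q) *: (p1 - p2).
Proof. by move=> E; rewrite mulmxBr DDp1 DDp2 swap4 E scalerBl scale1r. Qed.

Lemma trX : \tr X = \tr (p1 *m p2).
Proof. by rewrite mxtrace_mulC mulmxA i1. Qed.

Variable t : C.
Hypotheses (t1 : \tr p1 = t) (t2 : \tr p2 = t).

Lemma trDD : \tr ((p1 - p2) *m (p1 - p2)) = 2%:R * (t - \tr X).
Proof.
rewrite trX !(mulmxBr, mulmxBl) i1 i2 !raddfB /= t1 t2 [\tr (p2 *m p1)]mxtrace_mulC.
ring.
Qed.

Lemma Xpow_p1 m : X ^+ m.+1 *m p1 = X ^+ m.+1.
Proof. by rewrite exprSr -mulmxE -mulmxA i1'. Qed.

Section Tau.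
Variable q : C.
Hypothesis XX : X *m X = X - q *: (p1 - X).

Lemma tau2 : \tr (X ^+ 2) = \tr X - q * (t - \tr X).
Proof. by rewrite expr2 -mulmxE XX raddfB /= mxtraceZ raddfB /= t1. Qed.

Lemma tau_rec m : \tr (X ^+ m.+3) = \tr (X ^+ m.+2) - q * (\tr (X ^+ m.+1) - \tr (X ^+ m.+2)).
Proof.
have -> : X ^+ m.+3 = X ^+ m.+1 *m (X *m X) by rewrite mulmxE -expr2 -exprD addn2.
rewrite XX mulmxBr -scalemxAr mulmxBr Xpow_p1 mulmxE -exprSr.
by rewrite raddfB /= mxtraceZ raddfB.
Qed.

Lemma tau_closed k : \tr X = t + (q - 1) * k ->
  forall m, \tr (X ^+ m.+1) = t + (q ^+ m.+1 - 1) * k.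
Proof.
move=> h1X.
suff H : forall m, \tr (X ^+ m.+1) = t + (q ^+ m.+1 - 1) * k /\
                   \tr (X ^+ m.+2) = t + (q ^+ m.+2 - 1) * k by move=> m; case: (H m).
elim=> [|m [IH1 IH2]].
  split; first by rewrite expr1 h1X expr1.
  by rewrite tau2 h1X; ring.
split => //; rewrite tau_rec IH1 IH2 !exprS; ring.
Qed.
End Tau.

Lemma tr_idem m (Z : 'M[C]_m) : Z *m Z = Z -> \tr Z = (\rank Z)%:R.
Proof.
move=> hZ.
have e : col_base Z *m row_base Z = Z := mulmx_base Z.
have fC := col_base_full Z; have fB := row_base_free Z.
move: (col_base Z) (row_base Z) e fC fB => Cb B e fC fB.
have h0 : Cb *m (B *m Cb *m B) = Cb *m (1%:M *m B).
  by rewrite mul1mx !mulmxA e -mulmxA e hZ.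
have BC : B *m Cb = 1%:M.
  move/(row_full_inj fC): h0.
  by move/(row_free_inj fB).
by rewrite -{1}e mxtrace_mulC BC mxtrace1.
Qed.

Theorem core_a (c : C) : c != 0 -> c *: (X - Y) = p1 - p2 ->
  forall m, \tr (X ^+ m.+1) = t + (c^-1 ^+ m.+1 - 1) * ((\rank (p1 - p2))%:R / 2%:R).
Proof.
move=> c0 E.
have EXY : X - Y = c^-1 *: (p1 - p2) by rewrite -E scalerA mulVf // scale1r.
have R1 := R1_of_eq E.
have XX : X *m X = X - c^-1 *: (p1 - X) by rewrite -R1 scalerA mulVf // scale1r subKr.
apply: (tau_closed XX).
have D3' := D3 EXY.
have hD : adj (p1 - p2) = p1 - p2 by rewrite cadjB h1 h2.
have h2n : (2%:R : C) != 0 by rewrite pnatr_eq0.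
have hDD : adj ((p1 - p2) *m (p1 - p2)) = (p1 - p2) *m (p1 - p2) by rewrite cadjM hD.
case: (eqVneq c^-1 1) => [q1|q1].
  have DD0 : (p1 - p2) *m (p1 - p2) = 0.
    apply: herm_nil => //.
    by rewrite mulmxA D3' q1 subrr scale0r mul0mx.
  have := trDD; rewrite DD0 mxtrace0 q1 subrr mul0r addr0 => /esym /eqP.
  by rewrite mulf_eq0 (negbTE h2n) /= subr_eq0 => /eqP ->.
have q1' : 1 - c^-1 != 0 by rewrite subr_eq0 eq_sym.
set Z := (1 - c^-1)^-1 *: ((p1 - p2) *m (p1 - p2)).
have ZZ : Z *m Z = Z.
  rewrite /Z -scalemxAl -scalemxAr scalerA mulmxA D3' -scalemxAl scalerA.
  by congr (_ *: _); rewrite divfK.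
have ZD : Z *m (p1 - p2) = p1 - p2.
  by rewrite /Z -scalemxAl D3' scalerA mulVf // scale1r.
have rZ : \rank Z = \rank (p1 - p2).
  apply/eqP; rewrite eqn_leq; apply/andP; split.
    by rewrite /Z scalemxAr mxrankM_maxl.
  by rewrite -{1}ZD mxrankM_maxl.
have := tr_idem ZZ; rewrite rZ /Z mxtraceZ trDD => <-.
set u := \tr X; field; rewrite c0 /= subr_eq0; apply: contra q1 => /eqP ->; by rewrite invr1.
Qed.

Lemma powAB m (A B : 'M[C]_N) : (A *m B) ^+ m.+1 = A *m ((B *m A) ^+ m *m B).
Proof.
elim: m => [|m IH]; first by rewrite expr1 expr0 mul1mx.
rewrite exprSr -mulmxE IH.
by rewrite [in RHS]exprSr -mulmxE !mulmxA.
Qed.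

Lemma trAB m (A B : 'M[C]_N) : \tr ((A *m B) ^+ m.+1) = \tr ((B *m A) ^+ m.+1).
Proof.
rewrite powAB mxtrace_mulC -mulmxA.
by rewrite [in RHS]exprSr -mulmxE.
Qed.

Lemma trpowX m : \tr (X ^+ m.+1) = \tr ((p1 *m p2) ^+ m.+1).
Proof.
have -> : X = p1 *m (p2 *m p1) by rewrite mulmxA.
by rewrite trAB -mulmxA i1 trAB.
Qed.


Lemma trB (A B : 'M[C]_N) : \tr (A - B) = \tr A - \tr B.
Proof. exact: raddfB. Qed.

Lemma X2w : X ^+ 2 = p1 *m p2 *m p1 *m p2 *m p1.
Proof. by rewrite expr2 -mulmxE; norm. Qed.
Lemma X3w : X ^+ 3 = p1 *m p2 *m p1 *m p2 *m p1 *m p2 *m p1.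
Proof. by rewrite exprSr X2w -mulmxE; norm. Qed.

Local Notation W5 := (X *m p2 *m p1).
Local Notation W7 := (X *m p2 *m p1 *m p2 *m p1).

Lemma GG_l : (p1 - p1 *m p2) *m adj (p1 - p1 *m p2) = p1 - X.
Proof. rewrite cadjB cadjM h1 h2 !(mulmxBr, mulmxBl); norm. rewrite subrr subr0. reflexivity. Qed.
Lemma Ap1_l : (p1 - X) *m p1 = p1 - X.
Proof. rewrite mulmxBl; norm. reflexivity. Qed.
Lemma AX_l : (p1 - X) *m X = X - W5.
Proof. rewrite mulmxBl; norm. reflexivity. Qed.
Lemma Hp1_l (q : C) : (X - q *: p1) *m p1 = X - q *: p1.
Proof. rewrite mulmxBl -scalemxAl; norm. reflexivity. Qed.
Lemma AH_l (q : C) : (p1 - X) *m (X - q *: p1) = (X - W5) - q *: (p1 - X).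
Proof. rewrite mulmxBr -scalemxAr AX_l Ap1_l. reflexivity. Qed.
Lemma AHp1_l (q : C) : (p1 - X) *m (X - q *: p1) *m p1 = (p1 - X) *m (X - q *: p1).
Proof. rewrite -mulmxA Hp1_l. reflexivity. Qed.
Lemma AHX_l (q : C) : ((X - W5) - q *: (p1 - X)) *m X = (W5 - W7) - q *: (X - W5).
Proof. rewrite mulmxBl -scalemxAl AX_l mulmxBl; norm. reflexivity. Qed.

Lemma T0_l (q k : C) :
  (forall m, (1 <= m <= 3)%N -> \tr (X ^+ m) = t + (q ^+ m - 1) * k) ->
  \tr ((p1 - X) *m (X - q *: p1) *m (X - q *: p1)) = 0.
Proof.
move=> htr.
have e1 := htr 1%N isT; have e2 := htr 2%N isT; have e3 := htr 3%N isT.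
rewrite expr1 in e1; rewrite X2w in e2; rewrite X3w in e3.
rewrite mulmxBr -scalemxAr AHp1_l AH_l AHX_l.
move: e1 e2 e3; move: W7 W5 X => w7 w5 x e1 e2 e3.
rewrite !trB !mxtraceZ !trB !mxtraceZ !trB e1 e2 e3 t1.
ring.
Qed.

Lemma HA_l (q : C) : (X - q *: p1) *m (p1 - X) = (X - W5) - q *: (p1 - X).
Proof. rewrite mulmxBl -scalemxAl !mulmxBr; norm. reflexivity. Qed.

Lemma XX_l : X *m X = W5.
Proof. norm. reflexivity. Qed.

Lemma R_of_traces (c k : C) : c != 0 -> c^*%C = c ->
  (forall m, (1 <= m <= 3)%N -> \tr (X ^+ m) = t + (c^-1 ^+ m - 1) * k) ->
  c *: (X - X *m X) = p1 - X.
Proof.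
move=> c0 cr htr.
have qr : (c^-1)^*%C = c^-1 by rewrite conjc_inv cr.
have T0 := T0_l htr.
have hH : adj (X - c^-1 *: p1) = X - c^-1 *: p1.
  rewrite cadjB cadjZ qr !cadjM h1 h2 mulmxA. reflexivity.
have M0 : (X - c^-1 *: p1) *m (p1 - p1 *m p2) = 0.
  apply: tr_adj0.
  rewrite cadjM hH mulmxA -[_ *m _ *m adj _]mulmxA GG_l -mulmxA mxtrace_mulC.
  exact: T0.
have H0 : (X - c^-1 *: p1) *m (p1 - X) = 0.
  rewrite -GG_l mulmxA M0 mul0mx. reflexivity.
rewrite HA_l in H0.
move/eqP: H0; rewrite subr_eq0 => /eqP H0.
rewrite XX_l H0 scalerA mulfV // scale1r. reflexivity.
Qed.

Lemma iE_l (c : C) : p1 *m (c *: (X - Y) - (p1 - p2))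
   = - ((p1 - c *: X) *m (p1 - p1 *m p2)).
Proof.
rewrite mulmxBr -scalemxAr !(mulmxBr, mulmxBl) -?scalemxAl -?scalemxAr; norm.
rewrite [RHS]opprB scalerBr swapad. reflexivity.
Qed.

Lemma KG_l (c : C) : c *: (X - X *m X) = p1 - X ->
  (p1 - c *: X) *m (p1 - X) = 0.
Proof.
move=> R1; rewrite XX_l in R1.
rewrite mulmxBl -scalemxAl !mulmxBr; norm. rewrite R1 subrr. reflexivity.
Qed.

Lemma pE (c : C) : c *: (X - X *m X) = p1 - X ->
  p1 *m (c *: (X - Y) - (p1 - p2)) = 0.
Proof.
move=> R1.
have KG : (p1 - c *: X) *m (p1 - p1 *m p2) *m adj (p1 - p1 *m p2) = 0.
  rewrite -mulmxA GG_l. exact: KG_l.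
have K0 : (p1 - c *: X) *m (p1 - p1 *m p2) = 0.
  apply: MM0. rewrite [adj (_ *m _)]cadjM mulmxA KG mul0mx. reflexivity.
rewrite iE_l K0 oppr0. reflexivity.
Qed.

End Core.

Section CoreB.
Variable R : realType.
Local Notation C := R[i].

Theorem core_b N (p1 p2 : 'M[C]_N) (c k t : C) :
  adj p1 = p1 -> adj p2 = p2 -> p1 *m p1 = p1 -> p2 *m p2 = p2 ->
  \tr p1 = t -> \tr p2 = t -> c != 0 -> c^*%C = c ->
  (forall m, (1 <= m <= 3)%N -> \tr ((p1 *m p2) ^+ m) = t + (c^-1 ^+ m - 1) * k) ->
  c *: (p1 *m p2 *m p1 - p2 *m p1 *m p2) = p1 - p2.
Proof.
move=> h1 h2 i1 i2 t1 t2 c0 cr htr.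
have hX : forall m, (1 <= m <= 3)%N -> \tr ((p1 *m p2 *m p1) ^+ m) = t + (c^-1 ^+ m - 1) * k.
  by case=> // m hm; rewrite trpowX // htr.
have hY : forall m, (1 <= m <= 3)%N -> \tr ((p2 *m p1 *m p2) ^+ m) = t + (c^-1 ^+ m - 1) * k.
  by case=> // m hm; rewrite trpowX // trAB htr.
have R1 := R_of_traces h1 h2 i1 i2 t1 c0 cr hX.
have R2 := R_of_traces h2 h1 i2 i1 t2 c0 cr hY.
have E1 := pE h1 h2 i1 i2 R1.
have E2 := pE h2 h1 i2 i1 R2.
rewrite negE mulmxN in E2; move/eqP: E2; rewrite oppr_eq0 => /eqP E2.
set E := c *: (p1 *m p2 *m p1 - p2 *m p1 *m p2) - (p1 - p2) in E1 E2 *.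
have hE : adj E = E.
  rewrite /E cadjB cadjZ cr !cadjB !cadjM h1 h2 !mulmxA. reflexivity.
have eE : E = p1 *m (c *: (p2 *m p1) - p1) + p2 *m (p2 - c *: (p1 *m p2)).
  rewrite !mulmxBr -!scalemxAr !mulmxA i1 i2 sum4 -scalerBr. reflexivity.
have EE : E *m E = 0.
  rewrite -{1}hE {1}eE cadjD !cadjM h1 h2 mulmxDl -!mulmxA E1 E2 !mulmx0 addr0.
  reflexivity.
have := herm_nil hE EE.
move/eqP; rewrite /E subr_eq0 => /eqP ->. reflexivity.
Qed.
End CoreB.

Section Conc.
Variable R : realType.
Local Notation C := R[i].
Local Notation idx := (@mxtens_index _ _).
Local Notation unidx := (@mxtens_unindex _ _).

Lemma sum_idx p q (F : 'I_(p * q) -> C) :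
  \sum_(i < p * q) F i = \sum_(a < p) \sum_(b < q) F (idx (a, b)).
Proof.
rewrite pair_big /=; apply: reindex => /=.
exists unidx => [[x y]|x] _ /=; first by rewrite mxtens_indexK.
exact: (@mxtens_unindexK p q x).
Qed.

Lemma sum_only p (a : 'I_p) (F : 'I_p -> C) :
  (forall i, i != a -> F i = 0) -> \sum_i F i = F a.
Proof. by move=> H; rewrite (bigD1 a) //= big1 ?addr0 // => i /H. Qed.

Lemma sum_delta p (a : 'I_p) (F : 'I_p -> C) : \sum_i F i * (i == a)%:R = F a.
Proof. by rewrite (sum_only (a:=a)) ?eqxx ?mulr1 // => i /negbTE ->; rewrite mulr0. Qed.

Lemma sum_delta' p (a : 'I_p) (F : 'I_p -> C) : \sum_i (a == i)%:R * F i = F a.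
Proof. by rewrite (sum_only (a:=a)) ?eqxx ?mul1r // => i; rewrite eq_sym => /negbTE ->; rewrite mul0r. Qed.

Lemma idx_eq p q (a a' : 'I_p) (b b' : 'I_q) :
  (idx (a, b) == idx (a', b')) = (a == a') && (b == b').
Proof. by rewrite (inj_eq (can_inj (@mxtens_indexK p q))) xpair_eqE. Qed.

Lemma tensE m n p q (A : 'M[C]_(m, n)) (B : 'M[C]_(p, q)) a b c d :
  (A *t B) (idx (a, b)) (idx (c, d)) = A a c * B b d.
Proof. exact: tensmxE. Qed.

Lemma EE p (a c i j : 'I_p) : E R a c i j = (i == a)%:R * (j == c)%:R :> C.
Proof. by rewrite /E mxE -natrM mulnb. Qed.

Lemma idE p (i j : 'I_p) : (1%:M : 'M[C]_p) i j = (i == j)%:R.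
Proof. by rewrite mxE. Qed.


Variables (n r : nat) (V : 'I_r -> 'M[C]_n).

Definition W : 'M[C]_(n * n, r) := \matrix_(i < n * n, s < r) V s (unidx i).1 (unidx i).2.

Lemma WE a b s : W (idx (a, b)) s = V s a b.
Proof. by rewrite mxE mxtens_indexK. Qed.

Lemma tensEE (x : C) (a' c' b' d' a b c d : 'I_n) :
  (x *: (E R a' c' *t E R b' d')) (idx (a, b)) (idx (c, d))
  = x * ((a == a')%:R * (c == c')%:R * ((b == b')%:R * (d == d')%:R)).
Proof. by rewrite mxE tensE !EE. Qed.

Lemma PTE a b c d : PT V (idx (a, b)) (idx (c, d)) = \sum_s V s a b * (V s c d)^*.
Proof.
rewrite /PT summxE; apply: eq_bigr => s _.
rewrite summxE (sum_only (a:=a)) => [|a' ha]; last first.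
  have ha' : (a == a') = false by rewrite eq_sym (negbTE ha).
  rewrite summxE big1 // => b' _; rewrite summxE big1 // => c' _; rewrite summxE big1 // => d' _.
  by rewrite tensEE ha' !(mulr0n, mul0r, mulr0).
rewrite summxE (sum_only (a:=b)) => [|b' hb]; last first.
  have hb' : (b == b') = false by rewrite eq_sym (negbTE hb).
  rewrite summxE big1 // => c' _; rewrite summxE big1 // => d' _.
  by rewrite tensEE hb' !(mulr0n, mul0r, mulr0).
rewrite summxE (sum_only (a:=c)) => [|c' hc]; last first.
  have hc' : (c == c') = false by rewrite eq_sym (negbTE hc).
  rewrite summxE big1 // => d' _.
  by rewrite tensEE hc' !(mulr0n, mul0r, mulr0).
rewrite summxE (sum_only (a:=d)) => [|d' hd]; last first.
  have hd' : (d == d') = false by rewrite eq_sym (negbTE hd).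
  by rewrite tensEE hd' !(mulr0n, mul0r, mulr0).
by rewrite tensEE !eqxx !mulr1 /mxconj mxE.
Qed.

Lemma PT_W : PT V = W *m adj W.
Proof.
apply/matrixP => i j.
case: (mxtens_indexP i) => a b; case: (mxtens_indexP j) => c d.
rewrite PTE mxE; apply: eq_bigr => s _.
by rewrite cadjE !WE.
Qed.


Lemma tr_tens m p (A : 'M[C]_m) (B : 'M[C]_p) : \tr (A *t B) = \tr A * \tr B.
Proof.
rewrite /mxtrace sum_idx mulr_suml; apply: eq_bigr => a _.
rewrite mulr_sumr; apply: eq_bigr => b _; by rewrite tensE.
Qed.

Hypothesis ortho : forall s m : 'I_r, \tr (adj (V s) *m V m) = (s == m)%:R.

Lemma WW : adj W *m W = 1%:M.
Proof.
apply/matrixP => s u.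
rewrite mxE sum_idx idE -ortho /mxtrace exchange_big; apply: eq_bigr => b _.
rewrite mxE; apply: eq_bigr => a _.
by rewrite !cadjE !WE.
Qed.

Lemma P_herm : adj (PT V) = PT V.
Proof. by rewrite PT_W cadjM cadjK. Qed.

Lemma P_idem : PT V *m PT V = PT V.
Proof. by rewrite PT_W mulmxA -(mulmxA W) WW mulmx1. Qed.

Lemma P_tr : \tr (PT V) = r%:R.
Proof. by rewrite PT_W mxtrace_mulC WW mxtrace1. Qed.

Lemma P1_herm : adj (P1 (PT V)) = P1 (PT V).
Proof. by rewrite /P1 cadj_tens P_herm cadj1. Qed.

Lemma P1_idem : P1 (PT V) *m P1 (PT V) = P1 (PT V).
Proof. by rewrite /P1 tensmx_mul P_idem mulmx1. Qed.

Lemma P1_tr : \tr (P1 (PT V)) = (r * n)%:R.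
Proof. by rewrite /P1 tr_tens P_tr mxtrace1 natrM. Qed.

Lemma P2_herm : adj (P2 (PT V)) = P2 (PT V).
Proof. by rewrite /P2 cadj_cast cadj_tens P_herm cadj1. Qed.

Lemma P2_idem : P2 (PT V) *m P2 (PT V) = P2 (PT V).
Proof. by rewrite /P2 -castmxM tensmx_mul P_idem mulmx1. Qed.

Lemma P2_tr : \tr (P2 (PT V)) = (r * n)%:R.
Proof. by rewrite /P2 castmx_tr tr_tens P_tr mxtrace1 natrM mulrC. Qed.


Definition L : 'M[C]_(n * n * n, r * n) :=
  \matrix_(i, j) (((unidx (unidx i).1).1 == (unidx j).2)%:R
                  * V (unidx j).1 (unidx (unidx i).1).2 (unidx i).2).

Lemma LE a b c s j : L (idx (idx (a, b), c)) (idx (s, j)) = (a == j)%:R * V s b c.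
Proof. by rewrite mxE !mxtens_indexK. Qed.

Lemma castidx (e : (n * (n * n) = n * n * n)%N) a b c :
  cast_ord (esym e) (idx (idx (a, b), c)) = idx (a, idx (b, c)).
Proof. by apply: val_inj => /=; rewrite mulnDl -mulnA addnA. Qed.

Lemma P2E a b c a' b' c' :
  P2 (PT V) (idx (idx (a, b), c)) (idx (idx (a', b'), c'))
  = (a == a')%:R * PT V (idx (b, c)) (idx (b', c')).
Proof. by rewrite /P2 castmxE !castidx tensE idE. Qed.

Lemma P1E ab c ab' c' :
  P1 (PT V) (idx (ab, c)) (idx (ab', c')) = PT V ab ab' * (c == c')%:R.
Proof. by rewrite /P1 tensE idE. Qed.

Lemma LL : L *m adj L = P2 (PT V).
Proof.
apply/matrixP => i i'.
case: (mxtens_indexP i) => ab c; case: (mxtens_indexP ab) => a b.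
case: (mxtens_indexP i') => ab' c'; case: (mxtens_indexP ab') => a' b'.
rewrite P2E PTE mulr_sumr mxE sum_idx; apply: eq_bigr => s _.
rewrite (sum_only (a:=a)) => [|j hj]; last first.
  by rewrite cadjE !LE eq_sym (negbTE hj) !(mulr0n, mul0r).
rewrite cadjE !LE eqxx mul1r rmorphM rmorph_nat eq_sym mulrCA.
done.
Qed.


Lemma ATE s j m l : AT V (idx (s, j)) (idx (m, l)) =
  \sum_t \sum_z \sum_y \sum_x V t j x * (V s x y)^* * V m z y * (V t l z)^*.
Proof.
rewrite /AT summxE (sum_only (a:=s)) => [|s' hs]; last first.
  rewrite summxE big1 // => m' _.
  by rewrite tensE EE [s == _]eq_sym (negbTE hs) !(mulr0n, mul0r).
rewrite summxE (sum_only (a:=m)) => [|m' hm]; last first.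
  by rewrite tensE EE [m == _]eq_sym (negbTE hm) !(mulr0n, mul0r, mulr0).
rewrite tensE EE !eqxx !mul1r summxE; apply: eq_bigr => t _.
rewrite mxE; apply: eq_bigr => z _.
rewrite mxE mulr_suml; apply: eq_bigr => y _.
rewrite mxE mulr_suml mulr_suml; apply: eq_bigr => x _.
by rewrite !mxE.
Qed.


Lemma LP1E s j l b' c' :
  (adj L *m P1 (PT V)) (idx (s, j)) (idx (idx (l, b'), c'))
  = \sum_b (V s b c')^* * \sum_t V t j b * (V t l b')^*.
Proof.
rewrite mxE sum_idx sum_idx.
rewrite (sum_only (a:=j)) => [|a ha]; last first.
  rewrite big1 // => b _; rewrite big1 // => c _.
  by rewrite cadjE LE (negbTE ha) !(mulr0n, mul0r, rmorph0).
apply: eq_bigr => b _.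
rewrite (sum_only (a:=c')) => [|c hc]; last first.
  by rewrite P1E (negbTE hc) !(mulr0n, mulr0).
by rewrite cadjE LE P1E PTE eqxx mul1r eqxx mulr1.
Qed.

Lemma LP1L : adj L *m P1 (PT V) *m L = AT V.
Proof.
apply/matrixP => sj ml.
case: (mxtens_indexP sj) => s j; case: (mxtens_indexP ml) => m l.
rewrite ATE mxE sum_idx sum_idx.
rewrite (sum_only (a:=l)) => [|a' ha]; last first.
  rewrite big1 // => b' _; rewrite big1 // => c' _.
  by rewrite LE (negbTE ha) !(mulr0n, mul0r, mulr0).
transitivity (\sum_b' \sum_c' \sum_b \sum_t V t j b * (V s b c')^* * V m b' c' * (V t l b')^*).
  apply: eq_bigr => b' _; apply: eq_bigr => c' _.
  rewrite LE eqxx mul1r LP1E mulr_suml; apply: eq_bigr => b _.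
  rewrite mulr_sumr mulr_suml; apply: eq_bigr => t _.
  ring.
under eq_bigr => b' _ do under eq_bigr => c' _ do rewrite exchange_big.
under eq_bigr => b' _ do rewrite exchange_big.
by rewrite exchange_big.
Qed.


Lemma powL m : (adj L *m P1 (PT V) *m L) ^+ m.+1
  = adj L *m ((P1 (PT V) *m P2 (PT V)) ^+ m *m P1 (PT V)) *m L.
Proof.
elim: m => [|m IH]; first by rewrite expr1 expr0 mul1mx.
rewrite exprSr -mulmxE IH [in RHS]exprSr -mulmxE.
rewrite -!mulmxA; congr (_ *m _).
by rewrite (mulmxA L) LL.
Qed.

Lemma trAT m : \tr (AT V ^+ m.+1) = \tr ((P1 (PT V) *m P2 (PT V)) ^+ m.+1).
Proof.
rewrite -LP1L powL -mulmxA mxtrace_mulC -(mulmxA _ L) LL.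
by rewrite [in RHS]exprSr -mulmxE mulmxA.
Qed.

End Conc.

Lemma tens11 (R : realType) n p : (1%:M : 'M[R[i]]_n) *t (1%:M : 'M[R[i]]_p) = 1%:M.
Proof.
apply/matrixP => i j.
case: (mxtens_indexP i) => a b; case: (mxtens_indexP j) => c d.
by rewrite tensE !idE idx_eq -natrM mulnb.
Qed.

Lemma P2_one (R : realType) n : P2 (1%:M : 'M[R[i]]_(n * n)) = 1%:M.
Proof. by rewrite /P2 tens11 castmx1. Qed.


Lemma rcM (R : realType) (x y : R) : (x * y)%:C = x%:C * y%:C :> R[i].
Proof. exact: (rmorphM (real_complex R)). Qed.
Lemma rcB (R : realType) (x y : R) : (x - y)%:C = x%:C - y%:C :> R[i].
Proof. exact: (rmorphB (real_complex R)). Qed.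
Lemma rc1 (R : realType) : (1 : R)%:C = 1 :> R[i].
Proof. exact: (rmorph1 (real_complex R)). Qed.
Lemma rcV (R : realType) (x : R) : (x^-1)%:C = (x%:C)^-1 :> R[i].
Proof. exact: (fmorphV (real_complex R)). Qed.
Lemma rcX (R : realType) (x : R) m : (x ^+ m)%:C = (x%:C) ^+ m :> R[i].
Proof. exact: (rmorphXn (real_complex R)). Qed.
Lemma rcN (R : realType) m : (m%:R : R)%:C = m%:R :> R[i].
Proof. exact: (rmorph_nat (real_complex R)). Qed.

Lemma sq1 (R : realType) (Q : R) : 1 < Q -> Q * Q = 1 -> False.
Proof. move=> h1 h2; nra. Qed.

Lemma scal_conv (R : realType) (Q : R) m : Q != 0 ->
  ((Q ^- (2 * m))%:C : R[i]) = (((Q%:C) ^+ 2)^-1) ^+ m.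
Proof.
move=> Q0.
by rewrite rcV rcX exprVn exprM.
Qed.


Unset Implicit Arguments. Set Strict Implicit. Set Printing Implicit Defensive.

Theorem proposition5 (R : realType) (n r : nat) (V : 'I_r -> 'M[R[i]]_n) :
  (2 <= n)%N -> (0 < r)%N ->
  (forall s m : 'I_r, \tr (adj (V s) *m V m) = (s == m)%:R) ->
  (* (a) *)
  (forall Q : R, 0 < Q -> nontrivial_solution Q (PT V) ->
     forall m : nat, (1 <= m)%N ->
       \tr (AT V ^+ m) =
         (r * n)%:R + ((Q ^- (2 * m) - 1) * ((\rank (P1 (PT V) - P2 (PT V)))%:R / 2))%:C)
  /\
  (* (b) *)
  (forall (Q : R) (k : nat), 1 < Q -> (0 < k)%N ->
     (forall m : nat, (1 <= m <= 3)%N ->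
        \tr (AT V ^+ m) = (r * n)%:R + ((Q ^- (2 * m) - 1) * k%:R)%:C) ->
     nontrivial_solution Q (PT V)).
Proof.
move=> n2 r0 ortho.
have h1 := P1_herm V; have h2 := P2_herm V.
have i1 := P1_idem ortho; have i2 := P2_idem ortho.
have t1 := P1_tr ortho; have t2 := P2_tr ortho.
split.
  move=> Q Q0 [[hP iP Eq] _ _] [//|m] _.
  have Q0' : Q != 0 by rewrite gt_eqF.
  have c0 : (Q%:C) ^+ 2 != 0 :> R[i].
    apply: expf_neq0; apply: contra Q0' => /eqP [] ->; done.
  rewrite trAT -trpowX // (core_a h1 h2 i1 i2 t1 t2 c0 Eq m).
  by rewrite rcM rcB rc1 scal_conv // rcM rcV !rcN.
move=> Q k Q1 k0 htr.
have Q0' : Q != 0 by rewrite gt_eqF // (lt_trans ltr01 Q1).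
have c0 : (Q%:C) ^+ 2 != 0 :> R[i].
  apply: expf_neq0; apply: contra Q0' => /eqP [] ->; done.
have cr : (((Q%:C) ^+ 2)^*)%C = (Q%:C) ^+ 2 :> R[i].
  by rewrite rmorphXn; congr (_ ^+ _); apply: conjc_real.
have htr' : forall m, (1 <= m <= 3)%N -> \tr ((P1 (PT V) *m P2 (PT V)) ^+ m)
   = (r * n)%:R + (((Q%:C) ^+ 2)^-1 ^+ m - 1) * k%:R.
  by case=> // m hm; rewrite -trAT htr // rcM rcB rc1 scal_conv // rcN.
have Eq := core_b h1 h2 i1 i2 t1 t2 c0 cr htr'.
have hP := P_herm V; have iP := P_idem ortho.
split; first by split.
  apply/eqP => P0; have := P_tr ortho; rewrite P0 mxtrace0 => /eqP.
  by rewrite eq_sym pnatr_eq0 => /eqP r00; rewrite r00 in r0.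
apply/eqP => P1e.
have e := htr' 1%N isT; rewrite expr1 in e.
have P2e : P2 (PT V) = 1%:M by rewrite P1e P2_one.
rewrite P2e mulmx1 t1 in e.
have : (((Q%:C) ^+ 2)^-1 ^+ 1 - 1) * k%:R = 0 :> R[i].
  by apply: (addrI ((r * n)%:R)); rewrite addr0 -e.
move/eqP; rewrite mulf_eq0 pnatr_eq0 (gtn_eqF k0) orbF subr_eq0 expr1 invr_eq1 -rcX -rc1.
move/eqP => [] /eqP; rewrite expr2 => /eqP hQ.
exact: (@sq1 _ Q Q1 hQ).
Qed.
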